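(* Let $\mathbf{w}\in\Sigma^\omega$ be an infinite word with appearance constant $\mathbf{A}_\mathbf{w}<\infty$. For all integers $n,s\ge1$, there is a string attractor of $\mathbf{w}[0..n-1]$ for lengths $[s..2s]$ having size at most $2\mathbf{A}_\mathbf{w}$.
   Context: $\Sigma$ is a finite alphabet; words are indexed from $0$ and $[a..b]=\{a,a+1,\ldots,b\}$. The appearance constant $\mathbf{A}_\mathbf{w}$ is the least constant $C$ (if any) such that for every $m\ge1$, every length-$m$ factor of $\mathbf{w}$ has an occurrence in the prefix of $\mathbf{w}$ of length at most $Cm$. Given a word $x$ and a set $L\subseteq\mathbb{N}$, a string attractor of $x$ for lengths $L$ is a set of integers $S$ such that for every nonzero $\ell\in L$, every length-$\ell$ factor of $x$ has some occurrence in $x$ containing (crossing) an index in $S$. *)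

(* Defs.v *)
From HB Require Import structures.
From mathcomp Require Import all_boot all_order all_algebra.
From mathcomp Require Import reals.
Set Implicit Arguments. Unset Strict Implicit. Unset Printing Implicit Defensive.
Import Order.TTheory GRing.Theory Num.Theory.

(* Words are indexed from 0. An infinite word over Sigma is a map nat -> Sigma. *)

Definition factor (T : Type) (x : seq T) (i l : nat) : seq T := take l (drop i x).

Definition word_prefix (T : Type) (w : nat -> T) (n : nat) : seq T := mkseq w n.

Definition string_attractor (T : eqType) (x : seq T) (L : pred nat) (S : seq int) : Prop :=
  forall l, L l -> 0 < l ->
  forall i, i + l <= size x ->
  exists j, [/\ j + l <= size x, factor x j l = factor x i l &
    exists2 p, p \in S & ((Posz j <= p) && (p <= Posz (j + l) - 1))%R].

Definition appearance_bound (R : realType) (T : Type) (w : nat -> T) (C : R) : Prop :=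
  forall m, 0 < m -> forall i, exists j,
    (forall t, t < m -> w (j + t) = w (i + t)) /\ ((j + m)%:R <= C * m%:R)%R.

(* C is the appearance constant A_w (the least such bound; A_w < oo means it exists). *)
Definition appearance_constant (R : realType) (T : Type) (w : nat -> T) (C : R) : Prop :=
  appearance_bound w C /\ (forall C', appearance_bound w C' -> (C <= C')%R).

(* Main.v *)
Require Import Defs.
From HB Require Import structures.
From mathcomp Require Import all_boot all_order all_algebra.
From mathcomp Require Import reals.
From mathcomp Require Import zify.
Import Order.TTheory GRing.Theory Num.Theory.

Lemma factor_mkseq (T : Type) (w : nat -> T) n j l :
  j + l <= n -> factor (word_prefix w n) j l = mkseq (fun t => w (j + t)) l.
Proof.
move=> h; rewrite /factor /word_prefix.
have x0 : T := w 0.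
apply: (@eq_from_nth _ x0).
  by rewrite size_take size_drop !size_mkseq; apply/minn_idPl; lia.
move=> t; rewrite size_take size_drop size_mkseq => ht.
have htl : t < l by move: ht; rewrite /minn; case: ifP; lia.
rewrite nth_take // nth_drop !nth_mkseq //; lia.
Qed.

Theorem lemma14 (R : realType) (Sigma : finType) (w : nat -> Sigma) (A : R) :
  appearance_constant w A ->
  forall n s : nat, 1 <= n -> 1 <= s ->
  exists S : seq int,
    [/\ uniq S,
        string_attractor (word_prefix w n) (fun l => (s <= l) && (l <= 2 * s)) S
      & ((size S)%:R <= 2 * A)%R].
Proof.
move=> [HA _] n s hn hs.
have A1 : (1 <= A)%R.
  have [j [_ hj]] := HA 1 isT 0.
  rewrite mulr1 in hj; apply: (le_trans _ hj); rewrite ler1n; lia.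
have A0 : (0 <= A)%R by apply: le_trans A1.
pose P := fun k : 'I_n.+1 => ((k : nat)%:R <= 2 * A)%R.
pose K := \max_(k | P k) (k : nat).
have KP : P (Ordinal (ltn0Sn n)).
  by rewrite /P /= mulr_ge0.
have hc : 0 < #|P| by apply/card_gt0P; exists (Ordinal (ltn0Sn n)).
have [k0 k0P k0E] := @eq_bigmax_cond _ P (fun k => k : nat) hc.
have Kle : (K%:R <= 2 * A)%R by rewrite /K k0E.
have Kmax : forall k, k <= n -> (k%:R <= 2 * A)%R -> k <= K.
  move=> k hk hkA.
  exact: (@leq_bigmax_cond _ P (fun k => k : nat) (Ordinal (hk : k < n.+1)) hkA).
exists [seq (Posz (k.+1 * s) - 1)%R | k <- iota 0 K]; split.
- rewrite map_inj_in_uniq ?iota_uniq // => a b _ _.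
  move=> /eqP; rewrite (can_eq (addrK _)) => /eqP [] h.
  have : a.+1 == b.+1 by rewrite -(eqn_pmul2r hs) h.
  by move/eqP=> [].
- move=> l /andP [hl1 hl2] hl0 i hi.
  have [j0 [hj0 hj0A]] := HA l hl0 i.
  rewrite size_mkseq in hi.
  pose j := minn j0 i.
  have hjn : j + l <= n by rewrite /j; lia.
  have hjA : ((j + l)%:R <= A * l%:R)%R.
    apply: le_trans hj0A; rewrite ler_nat; lia.
  exists j; split.
  + by rewrite size_mkseq.
  + rewrite !factor_mkseq //; rewrite /mkseq; apply/eq_in_map => t; rewrite mem_iota add0n => ht.
    rewrite /j /minn; case: ifP => // _; exact: hj0.
  + pose k := (j + s) %/ s.
    have hk1 : k * s <= j + s by rewrite /k leq_divM.
    have hk2 : j + s < k.+1 * s by rewrite /k ltn_ceil.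
    have hk0 : 0 < k by rewrite /k divn_gt0 //; lia.
    exists (Posz (k.-1.+1 * s) - 1)%R.
      apply: map_f; rewrite mem_iota add0n.
      have -> : k.-1 < K = (k <= K) by lia.
      apply: Kmax; first by nia.
      have hks : ((k * s)%:R <= (2 * A) * s%:R)%R.
        have st : ((k * s)%:R <= (j + l)%:R :> R)%R by rewrite ler_nat; lia.
        apply: (le_trans st); apply: (le_trans hjA).
        rewrite [(2 * A)%R]mulrC -mulrA ler_wpM2l //.
        by rewrite -natrM ler_nat; lia.
      rewrite natrM in hks.
      by rewrite -(ler_pM2r (_ : (0 < s%:R :> R)%R)) // ltr0n.
    rewrite prednK //; move: hk1 hk2; rewrite mulSn; move: (k * s) => m h1 h2.
    apply/andP; split; lia.
- by rewrite size_map size_iota.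
Qed.
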